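(* Let $n \ge 1$ and $k \in \{1, \ldots, n\}$, with red tanks $R_1, \ldots, R_n$ each initially containing $1$ unit and blue tanks $B_1, \ldots, B_n$ initially empty. After running the moving window strategy (for $i = 1, \ldots, n-k+1$ in order, for $j = i, \ldots, i+k-1$ in order, equilibrate $R_i$ and $B_j$), the total amount of water in the red tanks is at most \[ \frac{n-k+1}{k+1} + (k-1). \] In particular, for $k = \lfloor \sqrt{n+2} \rfloor$ this total is strictly less than $2\sqrt{n}$.
   Context: Equilibrating two tanks $a \neq b$ with water levels $x_a, x_b$ replaces both levels by $\frac{x_a+x_b}{2}$ and leaves all other tanks unchanged. *)

(* Defs.v *)
From HB Require Import structures.
From mathcomp Require Import all_boot all_order all_algebra.
From mathcomp Require Import reals.
Set Implicit Arguments. Unset Strict Implicit. Unset Printing Implicit Defensive.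
Import Order.TTheory GRing.Theory Num.Theory.
Local Open Scope ring_scope.

(* A state: (water levels of red tanks, water levels of blue tanks),
   tanks indexed by natural numbers (tanks 1..n are the relevant ones). *)
Definition tstate (R : realType) := ((nat -> R) * (nat -> R))%type.

Definition equil (R : realType) (s : tstate R) (i j : nat) : tstate R :=
  let m := (s.1 i + s.2 j) / 2 in
  (fun x => if x == i then m else s.1 x, fun x => if x == j then m else s.2 x).

Definition init_state (R : realType) (n : nat) : tstate R :=
  (fun x => if (1 <= x <= n)%N then 1 else 0, fun _ => 0).

Definition moving_window (R : realType) (n k : nat) : tstate R :=
  foldl (fun s i => foldl (fun s' j => equil s' i j) s (iota i k))
        (init_state R n) (iota 1 (n - k + 1)).

Definition red_total (R : realType) (n k : nat) : R :=
  \sum_(1 <= i < n.+1) (moving_window R n k).1 i.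

(* Main.v *)
Require Import Defs.
From HB Require Import structures.
From mathcomp Require Import all_boot all_order all_algebra.
From mathcomp Require Import reals.
From mathcomp Require Import ring lra zify.
Import Order.TTheory GRing.Theory Num.Theory.
Local Open Scope ring_scope.

Lemma foldl_iota_ind (S : Type) (f : S -> nat -> S) (P : nat -> S -> Prop)
  (a m : nat) (s0 : S) :
  P 0%N s0 -> (forall t s, (t < m)%N -> P t s -> P t.+1 (f s (a + t)%N)) ->
  P m (foldl f s0 (iota a m)).
Proof.
move=> H0; elim: m => [|m IH] HS //.
have -> : iota a m.+1 = iota a m ++ [:: (a + m)%N] by rewrite -addn1 iotaD.
rewrite foldl_cat /=.
apply: (HS) => //; apply: IH => t s Ht; apply: HS; lia.
Qed.

Section Inner.
Variable R : realType.

Lemma inner (s : tstate R) (i k : nat) :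
  s.1 i <= 1 ->
  (forall u, (u < k)%N -> s.2 (i + u)%N * (k.+1)%:R + (u.+1)%:R <= k%:R) ->
  let s'' := foldl (fun s' j => equil s' i j) s (iota i k) in
  (forall x, x != i -> s''.1 x = s.1 x) /\
  s''.1 i * (k.+1)%:R + k%:R <= (k.+1)%:R /\
  (forall j, ~~ (i <= j < i + k)%N -> s''.2 j = s.2 j) /\
  (forall j, (i <= j < i + k)%N ->
     s''.2 j * (k.+1)%:R + (j.+1)%:R <= (i + k.+1)%:R).
Proof.
move=> h1 h2 /=.
set K := (k.+1)%:R : R.
have hK : K = k%:R + 1 by rewrite /K -addn1 natrD.
apply: (@foldl_iota_ind _ _ (fun t s' =>
  (forall x, x != i -> s'.1 x = s.1 x) /\
  s'.1 i * K + t%:R <= K /\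
  (forall j, ~~ (i <= j < i + t)%N -> s'.2 j = s.2 j) /\
  (forall j, (i <= j < i + t)%N ->
     s'.2 j * K + (j.+1)%:R <= (i + k.+1)%:R))).
- split => //; split; first by rewrite addr0 -[X in _ <= X]mul1r; apply: ler_wpM2r => //; exact: ler0n.
  split => // j; lia.
- move=> t s' ht [e1 [e2 [e3 e4]]].
  have eb : s'.2 (i + t)%N = s.2 (i + t)%N by apply: e3; lia.
  have hb := h2 _ ht.
  have key : (s'.1 i + s'.2 (i + t)%N) / 2 * K + (t.+1)%:R <= K.
    rewrite eb.
    have -> : (s'.1 i + s.2 (i + t)%N) / 2 * K =
              (s'.1 i * K + s.2 (i + t)%N * K) / 2 by ring.
    move: e2 hb hK; rewrite -/K -[t.+1%:R]natr1.
    move: (s'.1 i * K) (s.2 (i + t)%N * K) => a b; clearbody K; lra.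
  rewrite /equil /=; split; last split; last split.
  + by move=> x hx; rewrite (negbTE hx) e1.
  + by rewrite eqxx.
  + move=> j hj; have -> : (j == (i + t)%N) = false by apply/eqP; lia.
    apply: e3; lia.
  + move=> j hj; case: eqP => [->|hne].
    * rewrite -addnS !natrD; move: key; rewrite /K; lra.
    * apply: e4; lia.
Qed.
End Inner.

Lemma part1 (R : realType) (n k : nat) (hn : (1 <= n)%N)
    (hk1 : (1 <= k)%N) (hkn : (k <= n)%N) :
  red_total R n k <= (n - k + 1)%:R / (k + 1)%:R + (k - 1)%:R.
Proof.
set K := (k.+1)%:R : R.
have K0 : 0 < K by rewrite /K ltr0Sn.
pose P := fun (t : nat) (s : tstate R) =>
  (forall x, (t.+1 <= x)%N -> s.1 x = (init_state R n).1 x) /\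
  (forall x, (1 <= x < t.+1)%N -> s.1 x * K <= 1) /\
  (forall j, (t.+1 <= j < t.+1 + k - 1)%N -> s.2 j * K + (j.+1)%:R <= (t.+1 + k)%:R) /\
  (forall j, (t.+1 + k - 1 <= j)%N -> s.2 j = 0).
have HP : P (n - k + 1)%N (moving_window R n k).
  apply: foldl_iota_ind.
  - split => //; split; first by move=> x; lia.
    split => // j hj /=; rewrite mul0r add0r ler_nat; lia.
  - move=> t s ht [A [B [C1 C2]]].
    rewrite add1n.
    have hs1 : s.1 t.+1 <= 1.
      rewrite A // /init_state /=; case: ifP => _ //; exact: ler01.
    have hb : forall u, (u < k)%N -> s.2 (t.+1 + u)%N * (k.+1)%:R + (u.+1)%:R <= k%:R.
      move=> u hu; case: (ltnP (t.+1 + u) (t.+1 + k - 1)) => hc.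
      + have := C1 (t.+1 + u)%N ltac:(lia).
        rewrite -addnS !natrD -/K; lra.
      + rewrite C2 // mul0r add0r ler_nat; lia.
    have [I1 [I2 [I3 I4]]] := @inner R s t.+1 k hs1 hb.
    split; last split; last split.
    + move=> x hx; rewrite I1; [apply: A|apply/eqP]; lia.
    + move=> x hx; case: (x =P t.+1) => [->|hne].
      * move: I2; rewrite -/K -[K]natr1 -/K; lra.
      * rewrite I1; [apply: B|apply/eqP]; lia.
    + move=> j hj; have := I4 j ltac:(lia).
      by rewrite -/K (_ : (t.+1 + k.+1 = t.+2 + k)%N) //; lia.
    + move=> j hj; rewrite I3; [apply: C2|]; lia.
move: HP; rewrite /red_total; set s := moving_window R n k.
move=> [A [B _]].
rewrite (big_cat_nat _ (n := (n - k + 2)%N)) /=; [|lia|lia].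
apply: lerD.
- apply: le_trans (_ : \sum_(1 <= i < n - k + 2) K^-1 <= _).
  + rewrite !big_nat; apply: ler_sum => x hx.
    by rewrite -div1r ler_pdivlMr // B //; lia.
  + rewrite sumr_const_nat -mulr_natr mulrC (_ : (n - k + 2 - 1 = n - k + 1)%N) //; last lia.
    by rewrite /K !addn1 mul1r mulr_natr.
- have -> : \sum_(n - k + 2 <= i < n.+1) s.1 i = \sum_(n - k + 2 <= i < n.+1) (1:R).
    rewrite !big_nat; apply: eq_bigr => x hx; rewrite A; last lia.
    by rewrite /init_state /=; case: ifP => //; lia.
  by rewrite sumr_const_nat (_ : (n.+1 - (n - k + 2) = k - 1)%N) //; lia.
Qed.

Theorem mainTheorem6 (R : realType) (n k : nat) (hn : (1 <= n)%N)
    (hk1 : (1 <= k)%N) (hkn : (k <= n)%N) :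
  red_total R n k <= (n - k + 1)%:R / (k + 1)%:R + (k - 1)%:R
  /\ ((k : int) = Num.floor (Num.sqrt ((n + 2)%:R : R)) ->
      red_total R n k < 2 * Num.sqrt (n%:R : R)).
Proof.
have P1 := @part1 R n k hn hk1 hkn.
split => // hfl.
set x := Num.sqrt ((n + 2)%:R : R).
have x0 : 0 <= x by exact: sqrtr_ge0.
have xx : x ^+ 2 = (n + 2)%:R by rewrite sqr_sqrtr // ler0n.
have lo : k%:R <= x.
  have := floor_le x; rewrite -hfl //.
have hi : x < k%:R + 1.
  have : (Num.floor x < (k : int) + 1)%R by rewrite -hfl ltzD1.
  by rewrite floor_lt_int intrD.
have kk : (k * k <= n + 2)%N.
  rewrite -(ler_nat R) natrM; move: xx; rewrite expr2 => xx.
  have k0 : (0 : R) <= k%:R by exact: ler0n.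
  rewrite -xx; nra.
have kk2 : (n + 2 < k.+1 * k.+1)%N.
  rewrite -(ltr_nat R) natrM -natr1; move: xx; rewrite expr2 => xx.
  have k0 : (0 : R) <= k%:R by exact: ler0n.
  rewrite -xx; nra.
have key : ((n + k * k - k) * (n + k * k - k) < 4 * n * k.+1 * k.+1)%N by nia.
set B := (n - k + 1)%:R / (k + 1)%:R + (k - 1)%:R : R.
set K := (k.+1)%:R : R.
have K0 : 0 < K by rewrite /K ltr0Sn.
have BK : B * K = (n + k * k - k)%:R.
  rewrite /B /K [(k + 1)%N]addn1 mulrDl divfK; last by rewrite pnatr_eq0.
  by rewrite -natrM -natrD; congr (_%:R); nia.
have key' : (B * K) * (B * K) < 4 * n%:R * K * K.
  by rewrite BK -natrM /K -!natrM ltr_nat.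
set q := Num.sqrt (n%:R : R).
have q0 : 0 <= q by exact: sqrtr_ge0.
have qq : q ^+ 2 = n%:R by rewrite sqr_sqrtr // ler0n.
apply: le_lt_trans P1 _; rewrite -/B.
rewrite ltNge; apply/negP => hB.
have : 2 * q * K <= B * K by rewrite ler_pM2r.
move: key'; rewrite -qq expr2 => key' h2.
have h3 : 0 <= 2 * q * K by apply/mulr_ge0; [apply/mulr_ge0 => //|exact: ltW].
move: key' h2 h3.
have -> : 4 * (q * q) * K * K = (2 * q * K) * (2 * q * K) by ring. move: (B * K) (2 * q * K) => u v; nra.
Qed.
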